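(* Let $\Omega_L=(0,L)\times(0,\infty)$ with coordinates $(x,Y)$. Steady Euler flows $[u^0_e,v^0_e,P^0_e]$ on $\Omega_L$ are smooth solutions of $$u^0_e\partial_x u^0_e+v^0_e\partial_Y u^0_e+\partial_x P^0_e=0,\quad u^0_e\partial_x v^0_e+v^0_e\partial_Y v^0_e+\partial_Y P^0_e=0,\quad \partial_x u^0_e+\partial_Y v^0_e=0\ \text{ in }\Omega_L,$$ with $v^0_e|_{Y=0}=0$ and $v^0_e\to 0$ as $Y\to\infty$. Then there exists a nontrivial (non-shear) set of such Euler flows satisfying: (i) $0<c_0\le u^0_e\le C_0<\infty$ for some constants $c_0,C_0$; (ii) $\|v^0_e/Y\|_{L^\infty}\ll 1$; (iii) $\|Y^k\nabla^m v^0_e\|_{L^\infty}<\infty$ for all $k,m\ge 0$ up to any prescribed (large) order; (iv) $\|Y^k\nabla^m u^0_e\|_{L^\infty}<\infty$ for all $k\ge 0$, $m\ge 1$ up to any prescribed (large) order. Precisely: for every $\eta>0$ and every integer $K\ge 1$ there is $L_0>0$ such that for every $L\in(0,L_0]$ there exists such a flow on $\Omega_L$ with $v^0_e\not\equiv 0$ (so $u^0_e$ genuinely depends on $x$), satisfying (i), $\|v^0_e/Y\|_{L^\infty(\Omega_L)}\le\eta$, $\|Y^k\nabla^m v^0_e\|_{L^\infty}<\infty$ for $0\le k,m\le K$, and $\|Y^k\nabla^m u^0_e\|_{L^\infty}<\infty$ for $0\le k\le K$, $1\le m\le K$.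
   Context: $\nabla^m$ denotes the collection of all partial derivatives of order $m$ in $(x,Y)$. A shear flow is one of the form $(U(Y),0)$; ''nontrivial'' means the flows constructed are not shear flows. *)

(* Defs.v *)
From Stdlib Require Import Reals List.
From Coquelicot Require Import Coquelicot.
Open Scope R_scope.

Definition field2 := R -> R -> R.

Definition pd (d : bool) (f : field2) : field2 :=
  if d then fun x Y => Derive (fun t => f t Y) x
       else fun x Y => Derive (fun t => f x t) Y.

(* Iterated partial derivative along a list of directions; a list of
   length m gives one of the partial derivatives of order m (nabla^m). *)
Fixpoint partial (ds : list bool) (f : field2) : field2 :=
  match ds with
  | nil => f
  | d :: ds' => pd d (partial ds' f)
  end.

Definition in_Omega (L x Y : R) : Prop := 0 < x < L /\ 0 < Y.

Definition smooth_on_Omega (L : R) (f : field2) : Prop :=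
  forall (ds : list bool) (x Y : R), in_Omega L x Y ->
    ex_derive (fun t => partial ds f t Y) x /\
    ex_derive (fun t => partial ds f x t) Y /\
    continuous (fun p : R * R => partial ds f (fst p) (snd p)) (x, Y).

Definition steady_Euler_flow (L : R) (u v P : field2) : Prop :=
  smooth_on_Omega L u /\ smooth_on_Omega L v /\ smooth_on_Omega L P /\
  (forall x Y, in_Omega L x Y ->
     u x Y * pd true u x Y + v x Y * pd false u x Y + pd true P x Y = 0 /\
     u x Y * pd true v x Y + v x Y * pd false v x Y + pd false P x Y = 0 /\
     pd true u x Y + pd false v x Y = 0) /\
  (forall x, 0 < x < L -> filterlim (fun Y => v x Y) (at_right 0) (locally 0)) /\
  (forall x, 0 < x < L ->
     filterlim (fun Y => v x Y) (Rbar_locally p_infty) (locally 0)).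

(* ||Y^k nabla^m f||_{L^oo(Omega_L)} < oo (f continuous, so sup = ess sup). *)
Definition weighted_deriv_bounded (L : R) (k m : nat) (f : field2) : Prop :=
  exists M : R, forall (ds : list bool) (x Y : R),
    length ds = m -> in_Omega L x Y -> Rabs (Y ^ k * partial ds f x Y) <= M.

(* Main.v *)
Require Import Defs.
From Stdlib Require Import Reals List.
From Coquelicot Require Import Coquelicot.
From Stdlib Require Import Lra Psatz Classical.
Open Scope R_scope.

Inductive ex := EC (c : R) | EA | EY | EV | EAdd (a b : ex) | EMul (a b : ex).

Fixpoint eval (e : ex) (x Y : R) : R :=
  match e with
  | EC c => c | EA => x + 1 | EY => Y
  | EV => / ((x + 1) * (x + 1) + Y * Y)
  | EAdd a b => eval a x Y + eval b x Y
  | EMul a b => eval a x Y * eval b x Y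
  end.

Fixpoint deriv (d : bool) (e : ex) : ex :=
  match e with
  | EC _ => EC 0
  | EA => EC (if d then 1 else 0)
  | EY => EC (if d then 0 else 1)
  | EV => EMul (EC (-2)) (EMul (if d then EA else EY) (EMul EV EV))
  | EAdd a b => EAdd (deriv d a) (deriv d b)
  | EMul a b => EAdd (EMul (deriv d a) b) (EMul a (deriv d b))
  end.

Fixpoint derivs (ds : list bool) (e : ex) : ex :=
  match ds with nil => e | d :: ds' => deriv d (derivs ds' e) end.

Lemma Dpos x Y : -1 < x -> 0 < (x + 1) * (x + 1) + Y * Y.
Proof. intros; nra. Qed.

Lemma deriv_x e x Y : -1 < x ->
  is_derive (fun t => eval e t Y) x (eval (deriv true e) x Y).
Proof.
  intros Hx; induction e; simpl.
  - apply (is_derive_const c x).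
  - auto_derive; auto; ring.
  - apply (is_derive_const Y x).
  - pose proof (Dpos x Y Hx). auto_derive. lra. field. lra.
  - apply (is_derive_plus (fun t => eval e1 t Y) (fun t => eval e2 t Y)); auto.
  - apply (is_derive_mult (fun t => eval e1 t Y) (fun t => eval e2 t Y)); auto.
    intros; apply Rmult_comm.
Qed.

Lemma deriv_y e x Y : -1 < x ->
  is_derive (fun t => eval e x t) Y (eval (deriv false e) x Y).
Proof.
  intros Hx; induction e; simpl.
  - apply (is_derive_const c Y).
  - apply (is_derive_const (x+1) Y).
  - auto_derive; auto; ring.
  - pose proof (Dpos x Y Hx). auto_derive. lra. field. lra.
  - apply (is_derive_plus (fun t => eval e1 x t) (fun t => eval e2 x t)); auto.
  - apply (is_derive_mult (fun t => eval e1 x t) (fun t => eval e2 x t)); auto.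
    intros; apply Rmult_comm.
Qed.

Lemma loc_gt x : -1 < x -> locally x (fun t => -1 < t).
Proof.
  intros Hx. assert (H : 0 < x + 1) by lra.
  exists (mkposreal _ H). intros t Ht. simpl in Ht.
  unfold ball in Ht; simpl in Ht; unfold AbsRing_ball, abs, minus, plus, opp in Ht; simpl in Ht.
  apply Rabs_lt_between in Ht. lra.
Qed.

Lemma partial_eval ds e x Y : -1 < x ->
  partial ds (eval e) x Y = eval (derivs ds e) x Y.
Proof.
  revert x Y; induction ds as [|d ds IH]; intros x Y Hx; simpl; auto.
  destruct d; simpl.
  - rewrite (Derive_ext_loc _ (fun t => eval (derivs ds e) t Y)).
    + apply is_derive_unique, deriv_x; auto.
    + generalize (loc_gt x Hx). apply filter_imp. intros; apply IH; auto.
  - rewrite (Derive_ext _ (fun t => eval (derivs ds e) x t)).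
    + apply is_derive_unique, deriv_y; auto.
    + intros; apply IH; auto.
Qed.

Lemma pd_eval d e x Y : -1 < x -> pd d (eval e) x Y = eval (deriv d e) x Y.
Proof. intros H. apply (partial_eval (d :: nil) e x Y H). Qed.

Lemma cont_eval e x Y : -1 < x ->
  continuous (fun p : R * R => eval e (fst p) (snd p)) (x, Y).
Proof.
  intros Hx; induction e; simpl.
  - apply continuous_const.
  - apply (continuous_plus (fun p : R*R => fst p) (fun _ => 1)).
    apply continuous_fst. apply continuous_const.
  - apply continuous_snd.
  - apply (continuous_comp (fun p : R*R => (fst p + 1) * (fst p + 1) + snd p * snd p) Rinv).
    + apply (continuous_plus (fun p : R*R => (fst p + 1) * (fst p + 1)) (fun p : R*R => snd p * snd p)).
      * apply (continuous_mult (fun p : R*R => (fst p + 1)) (fun p : R*R => (fst p + 1)));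
        apply (continuous_plus (fun p : R*R => fst p) (fun _ => 1));
        (apply continuous_fst || apply continuous_const).
      * apply (continuous_mult (fun p : R*R => snd p) (fun p : R*R => snd p)); apply continuous_snd.
    + simpl. apply continuous_Rinv. pose proof (Dpos x Y Hx); lra.
  - apply (continuous_plus (fun p : R*R => eval e1 (fst p) (snd p)) (fun p : R*R => eval e2 (fst p) (snd p))); auto.
  - apply (continuous_mult (fun p : R*R => eval e1 (fst p) (snd p)) (fun p : R*R => eval e2 (fst p) (snd p))); auto.
Qed.

Lemma smooth_eval L e : smooth_on_Omega L (eval e).
Proof.
  intros ds x Y [[Hx _] _]. assert (Hx' : -1 < x) by lra.
  split; [|split].
  - exists (eval (deriv true (derivs ds e)) x Y).
    apply (is_derive_ext_loc (fun t => eval (derivs ds e) t Y)).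
    + generalize (loc_gt x Hx'). apply filter_imp. intros; symmetry; apply partial_eval; auto.
    + apply deriv_x; auto.
  - exists (eval (deriv false (derivs ds e)) x Y).
    apply (is_derive_ext (fun t => eval (derivs ds e) x t)).
    + intros; symmetry; apply partial_eval; auto.
    + apply deriv_y; auto.
  - apply (continuous_ext_loc _ (fun p : R*R => eval (derivs ds e) (fst p) (snd p))).
    + assert (H : 0 < x + 1) by lra.
      exists (mkposreal _ H). intros [t s] [Ht _]. simpl in Ht |- *.
      unfold ball in Ht; simpl in Ht; unfold AbsRing_ball, abs, minus, plus, opp in Ht; simpl in Ht.
      apply Rabs_lt_between in Ht. symmetry; apply partial_eval; lra.
    + apply cont_eval; auto.
Qed.

Fixpoint ERI (p : nat) : ex * ex :=
  match p with
  | O => (EC 1, EC 0)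
  | S p => (EMul (EAdd (EMul EA (fst (ERI p))) (EMul EY (snd (ERI p)))) EV,
            EMul (EAdd (EMul EA (snd (ERI p))) (EMul (EC (-1)) (EMul EY (fst (ERI p))))) EV)
  end.

Lemma RI_deriv p x Y : -1 < x ->
  eval (deriv true (fst (ERI p))) x Y = - INR p * eval (fst (ERI (S p))) x Y /\
  eval (deriv true (snd (ERI p))) x Y = - INR p * eval (snd (ERI (S p))) x Y /\
  eval (deriv false (fst (ERI p))) x Y = INR p * eval (snd (ERI (S p))) x Y /\
  eval (deriv false (snd (ERI p))) x Y = - INR p * eval (fst (ERI (S p))) x Y.
Proof.
  intros Hx. pose proof (Dpos x Y Hx) as HD.
  induction p as [|p IH].
  - simpl. repeat split; ring.
  - destruct IH as [H1 [H2 [H3 H4]]].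
    cbn [ERI fst snd deriv eval] in *.
    rewrite H1, H2, H3, H4.
    set (r := eval (fst (ERI p)) x Y). set (i := eval (snd (ERI p)) x Y).
    rewrite !S_INR.
    repeat split; field; lra.
Qed.

Lemma RI_norm p x Y : -1 < x ->
  eval (fst (ERI p)) x Y ^ 2 + eval (snd (ERI p)) x Y ^ 2 =
  (/ ((x + 1) * (x + 1) + Y * Y)) ^ p.
Proof.
  intros Hx. pose proof (Dpos x Y Hx) as HD.
  induction p as [|p IH]; simpl. ring.
  rewrite <- IH. field. lra.
Qed.

Lemma sq_le1 z : z * z <= 1 -> Rabs z <= 1.
Proof.
  intros H. assert (E : Rabs z * Rabs z = z * z) by (rewrite <- Rabs_mult; apply Rabs_pos_eq; nra).
  pose proof (Rabs_pos z). nra.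
Qed.

Lemma invD_bounds x Y : 0 < x -> 0 < / ((x + 1) * (x + 1) + Y * Y) <= 1 /\
   Y * Y * / ((x + 1) * (x + 1) + Y * Y) <= 1.
Proof.
  intros Hx. assert (HD : 1 <= (x + 1) * (x + 1) + Y * Y) by nra.
  split; [split|].
  - apply Rinv_0_lt_compat; lra.
  - rewrite <- Rinv_1. apply Rinv_le_contravar; lra.
  - apply (Rmult_le_reg_r ((x + 1) * (x + 1) + Y * Y)). lra.
    rewrite Rmult_assoc, Rinv_l by lra. nra.
Qed.

Lemma pow_le1 a n : 0 <= a <= 1 -> 0 <= a ^ n <= 1.
Proof.
  intros H; induction n; simpl; [lra|]. nra.
Qed.

Definition RI (b : bool) (p : nat) : ex := if b then fst (ERI p) else snd (ERI p).

Lemma RI_weight b p k x Y : 0 < x -> (k <= p)%nat ->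
  Rabs (Y ^ k * eval (RI b p) x Y) <= 1.
Proof.
  intros Hx Hk. apply sq_le1.
  pose proof (RI_norm p x Y ltac:(lra)) as HN.
  destruct (invD_bounds x Y Hx) as [[H1 H2] H3].
  set (iD := / ((x + 1) * (x + 1) + Y * Y)) in *.
  set (z := eval (RI b p) x Y).
  assert (Hz : z * z <= iD ^ p).
  { rewrite <- HN. unfold z, RI; destruct b; simpl; nra. }
  replace p with (k + (p - k))%nat in Hz by lia.
  rewrite pow_add in Hz.
  destruct (pow_le1 iD (p - k)) as [A1 A2]; [lra|].
  destruct (pow_le1 (Y * Y * iD) k) as [B1 B2]; [nra|].
  rewrite !Rpow_mult_distr in B1, B2.
  assert (E : Y ^ k * z * (Y ^ k * z) = Y ^ k * Y ^ k * (z * z)) by ring.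
  rewrite E.
  assert (0 <= iD ^ k) by (apply pow_le; lra).
  assert (0 <= Y ^ k * Y ^ k) by nra.
  apply Rle_trans with (Y ^ k * Y ^ k * (iD ^ k * iD ^ (p - k))).
  apply Rmult_le_compat_l; auto.
  nra.
Qed.

Lemma R_le1 p x Y : 0 < x -> Rabs (eval (fst (ERI p)) x Y) <= 1.
Proof. intros Hx. pose proof (RI_weight true p 0 x Y Hx ltac:(lia)) as H. simpl in H. rewrite Rmult_1_l in H. exact H. Qed.

Lemma I_lin p x Y : 0 < x -> 0 <= Y -> Rabs (eval (snd (ERI p)) x Y) <= INR p * Y.
Proof.
  intros Hx HY. induction p as [|p IH].
  - simpl. rewrite Rabs_R0. lra.
  - pose proof (R_le1 p x Y Hx) as HR.
    cbn [ERI fst snd eval]. rewrite S_INR.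
    set (r := eval (fst (ERI p)) x Y) in *. set (i := eval (snd (ERI p)) x Y) in *.
    assert (HD : 1 <= (x + 1) * (x + 1) + Y * Y) by nra.
    rewrite Rabs_mult, Rabs_inv, (Rabs_pos_eq ((x + 1) * (x + 1) + Y * Y)) by lra.
    apply (Rmult_le_reg_r ((x + 1) * (x + 1) + Y * Y)). lra.
    rewrite Rmult_assoc, Rinv_l, Rmult_1_r by lra.
    eapply Rle_trans. apply Rabs_triang.
    rewrite !Rabs_mult, (Rabs_pos_eq (x+1)), (Rabs_pos_eq Y) by lra.
    replace (Rabs (-1)) with 1 by (unfold Rabs; destruct Rcase_abs; lra).
    assert (0 <= INR p) by apply pos_INR.
    pose proof (Rabs_pos i). pose proof (Rabs_pos r).
    assert (x + 1 <= (x + 1) * (x + 1) + Y * Y) by nra.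
    assert ((x+1) * Rabs i <= (x+1) * (INR p * Y)) by (apply Rmult_le_compat_l; lra).
    assert (0 <= INR p * Y) by nra.
    assert (Y * Rabs r <= Y) by nra.
    nra.
Qed.

Definition coef (d b : bool) (p : nat) : R :=
  if d then - INR p else if b then INR p else - INR p.
Definition nb (d b : bool) : bool := if d then b else negb b.

Lemma RI_d d b p x Y : -1 < x ->
  eval (deriv d (RI b p)) x Y = coef d b p * eval (RI (nb d b) (S p)) x Y.
Proof.
  intros Hx. destruct (RI_deriv p x Y Hx) as [H1 [H2 [H3 H4]]].
  destruct d, b; unfold RI, coef, nb; simpl negb; cbv iota; assumption.
Qed.

Lemma Rabs_coef d b p : Rabs (coef d b p) = INR p.
Proof.
  pose proof (pos_INR p).
  destruct d, b; unfold coef; try rewrite Rabs_Ropp; apply Rabs_pos_eq; lra.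
Qed.

Lemma lin_partial ds c1 c0 b p : exists c b',
  Rabs c <= Rabs c0 * INR (p + length ds) ^ length ds /\
  forall x Y, -1 < x ->
    partial ds (fun x Y => c1 + c0 * eval (RI b p) x Y) x Y =
    (match ds with nil => c1 | _ => 0 end) + c * eval (RI b' (p + length ds)) x Y.
Proof.
  induction ds as [|d ds IH].
  - exists c0, b. simpl. rewrite Nat.add_0_r. split; [lra|]. auto.
  - destruct IH as [c [b' [Hc H]]].
    set (c1' := match ds with nil => c1 | _ => 0 end) in H.
    set (q := (p + length ds)%nat) in *.
    exists (c * coef d b' q), (nb d b').
    replace (p + length (d :: ds))%nat with (S q) by (unfold q; simpl; lia).
    split.
    + rewrite Rabs_mult, Rabs_coef. simpl length. rewrite S_INR.
      pose proof (pos_INR q). pose proof (Rabs_pos c). pose proof (Rabs_pos c0).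
      simpl. assert (INR q ^ length ds <= (INR q + 1) ^ length ds) by (apply pow_incr; lra).
      assert (0 <= INR q ^ length ds) by (apply pow_le; lra).
      assert (Rabs c0 * INR q ^ length ds <= Rabs c0 * (INR q + 1) ^ length ds) by (apply Rmult_le_compat_l; lra).
      nra.
    + intros x Y Hx.
      assert (E : forall x', -1 < x' -> forall Y', partial ds (fun x Y => c1 + c0 * eval (RI b p) x Y) x' Y'
                = eval (EAdd (EC c1') (EMul (EC c) (RI b' q))) x' Y')
        by (intros; rewrite H; auto).
      destruct d; cbn [partial pd].
      * rewrite (Derive_ext_loc _ (fun t => eval (EAdd (EC c1') (EMul (EC c) (RI b' q))) t Y)).
        -- rewrite (is_derive_unique _ _ _ (deriv_x _ x Y Hx)).
           cbn [deriv eval]. rewrite RI_d by auto. ring.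
        -- generalize (loc_gt x Hx). apply filter_imp. intros; apply E; auto.
      * rewrite (Derive_ext _ (fun t => eval (EAdd (EC c1') (EMul (EC c) (RI b' q))) x t)).
        -- rewrite (is_derive_unique _ _ _ (deriv_y _ x Y Hx)).
           cbn [deriv eval]. rewrite RI_d by auto. ring.
        -- intros; apply E; auto.
Qed.

Definition eu dl N := EAdd (EC 1) (EMul (EC (-dl)) (RI true N)).
Definition ev dl N := EAdd (EC 0) (EMul (EC dl) (RI false N)).
Definition eP dl N := EMul (EC (-1/2)) (EAdd (EMul (eu dl N) (eu dl N)) (EMul (ev dl N) (ev dl N))).

Lemma euler_eqs dl N x Y : -1 < x ->
  let u := eval (eu dl N) in let v := eval (ev dl N) in let P := eval (eP dl N) in
     u x Y * pd true u x Y + v x Y * pd false u x Y + pd true P x Y = 0 /\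
     u x Y * pd true v x Y + v x Y * pd false v x Y + pd false P x Y = 0 /\
     pd true u x Y + pd false v x Y = 0.
Proof.
  intros Hx u v P. unfold u, v, P. rewrite !pd_eval by exact Hx.
  unfold eP, eu, ev; cbn [deriv eval]. rewrite !RI_d by exact Hx.
  unfold coef, nb; cbn [negb].
  repeat split.
all: set (a1 := eval (RI true N) x Y); set (a2 := eval (RI false N) x Y); set (a3 := eval (RI true (S N)) x Y); set (a4 := eval (RI false (S N)) x Y); set (n := INR N).
all: match goal with |- @eq ?T _ _ => idtac T end. all: field.
Qed.

Lemma ball0 (eps : posreal) z : Rabs z < eps -> ball 0 eps z.
Proof.
  intros H. unfold ball; simpl; unfold AbsRing_ball, abs, minus, plus, opp; simpl.
  rewrite Ropp_0, Rplus_0_r. exact H.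
Qed.

Lemma loc_gt' z y : z < y -> locally y (fun t => z < t).
Proof.
  intros Hx. assert (H : 0 < y - z) by lra.
  exists (mkposreal _ H). intros t Ht. simpl in Ht.
  unfold ball in Ht; simpl in Ht; unfold AbsRing_ball, abs, minus, plus, opp in Ht; simpl in Ht.
  apply Rabs_lt_between in Ht. lra.
Qed.

Lemma v_bound dl N x Y : 0 < x -> 0 <= Y -> 0 <= dl ->
  Rabs (eval (ev dl N) x Y) <= dl * INR N * Y.
Proof.
  intros Hx HY Hd. unfold ev; cbn [eval].
  rewrite Rplus_0_l, Rabs_mult, (Rabs_pos_eq dl) by lra.
  pose proof (I_lin N x Y Hx HY). unfold RI. rewrite Rmult_assoc.
  apply Rmult_le_compat_l; auto.
Qed.

Lemma v_bound2 dl N x Y : 0 < x -> 0 <= dl -> (1 <= N)%nat ->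
  Rabs (Y * eval (ev dl N) x Y) <= dl.
Proof.
  intros Hx Hd HN. unfold ev; cbn [eval].
  pose proof (RI_weight false N 1 x Y Hx HN) as H. simpl pow in H. rewrite Rmult_1_r in H.
  replace (Y * (0 + dl * eval (RI false N) x Y)) with (dl * (Y * eval (RI false N) x Y)) by ring.
  rewrite Rabs_mult, (Rabs_pos_eq dl) by lra.
  pose proof (Rabs_pos (Y * eval (RI false N) x Y)). nra.
Qed.

Theorem propositionA1 :
  forall (eta : R) (K : nat), 0 < eta -> (1 <= K)%nat ->
  exists L0 : R, 0 < L0 /\
  forall L : R, 0 < L <= L0 ->
  exists u v P : field2,
    steady_Euler_flow L u v P /\
    (exists x Y, in_Omega L x Y /\ v x Y <> 0) /\
    (exists c0 C0 : R, 0 < c0 /\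
       forall x Y, in_Omega L x Y -> c0 <= u x Y <= C0) /\
    (forall x Y, in_Omega L x Y -> Rabs (v x Y / Y) <= eta) /\
    (forall k m : nat, (k <= K)%nat -> (m <= K)%nat ->
       weighted_deriv_bounded L k m v) /\
    (forall k m : nat, (k <= K)%nat -> (1 <= m <= K)%nat ->
       weighted_deriv_bounded L k m u).
Proof.
  intros eta K Heta HK.
  exists 1. split; [lra|]. intros L HL.
  set (N := S K).
  assert (HN : 1 <= INR N) by (unfold N; rewrite S_INR; pose proof (pos_INR K); lra).
  set (dl := eta / (2 + 2 * eta) / INR N).
  assert (Hdn : dl * INR N = eta / (2 + 2 * eta)) by (unfold dl; field; lra).
  assert (Hq1 : eta / (2 + 2 * eta) <= eta).
  { apply (Rmult_le_reg_r (2 + 2 * eta)); [lra|]. unfold Rdiv; rewrite Rmult_assoc, Rinv_l by lra. nra. }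
  assert (Hq2 : eta / (2 + 2 * eta) <= 1/2).
  { apply (Rmult_le_reg_r (2 + 2 * eta)); [lra|]. unfold Rdiv; rewrite Rmult_assoc, Rinv_l by lra. nra. }
  assert (Hd0 : 0 < dl) by (unfold dl; apply Rdiv_lt_0_compat; [apply Rdiv_lt_0_compat|]; lra).
  assert (Hd1 : dl <= dl * INR N) by nra.
  exists (eval (eu dl N)), (eval (ev dl N)), (eval (eP dl N)).
  split; [|split; [|split; [|split; [|split]]]].
  -
    split; [apply smooth_eval|]. split; [apply smooth_eval|]. split; [apply smooth_eval|].
    split; [intros x Y [[Hx _] _]; apply euler_eqs; lra|].
    split.
    + intros x [Hx _]. apply filterlim_locally. intros eps.
      assert (Hr : 0 < eps / (eta + 1)) by (apply Rdiv_lt_0_compat; [apply cond_pos|lra]).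
      exists (mkposreal _ Hr). intros Y HY HYp. simpl in HY.
      unfold ball in HY; simpl in HY; unfold AbsRing_ball, abs, minus, plus, opp in HY; simpl in HY.
      rewrite Ropp_0, Rplus_0_r, Rabs_pos_eq in HY by lra.
      apply ball0. eapply Rle_lt_trans. apply v_bound; lra.
      pose proof (cond_pos eps).
      assert (eta * Y < eps).
      { apply Rle_lt_trans with (eta * (eps / (eta + 1))). apply Rmult_le_compat_l; lra.
        apply (Rmult_lt_reg_r (eta + 1)); [lra|]. unfold Rdiv. rewrite Rmult_assoc, (Rmult_assoc eps), Rinv_l by lra. nra. }
      nra.
    + intros x [Hx _]. apply filterlim_locally. intros eps.
      exists (dl / eps). intros Y HY. pose proof (cond_pos eps).
      assert (HYp : 0 < Y) by (assert (0 < dl / eps) by (apply Rdiv_lt_0_compat; lra); lra).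
      apply ball0. pose proof (v_bound2 dl N x Y Hx ltac:(lra) ltac:(unfold N; lia)) as Hb.
      rewrite Rabs_mult, (Rabs_pos_eq Y) in Hb by lra.
      assert (dl < eps * Y).
      { apply (Rmult_lt_reg_r (/ eps)). apply Rinv_0_lt_compat; lra.
        rewrite (Rmult_comm eps), Rmult_assoc, Rinv_r, Rmult_1_r by lra. exact HY. }
      pose proof (Rabs_pos (eval (ev dl N) x Y)). nra.
  -
    apply NNPP. intros Hc.
    set (x0 := L / 2). assert (Hx0 : 0 < x0 < L) by (unfold x0; lra).
    assert (HI : forall Y, 0 < Y -> eval (RI false N) x0 Y = 0).
    { intros Y HY. destruct (Req_dec (eval (RI false N) x0 Y) 0) as [E|E]; auto.
      exfalso; apply Hc. exists x0, Y. split. split; auto.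
      unfold ev; cbn [eval]. intros E'. apply E. apply (Rmult_eq_reg_l dl); lra. }
    assert (HD : Derive (fun t => eval (RI false N) x0 t) 1 = 0).
    { rewrite (Derive_ext_loc _ (fun _ => 0)). apply Derive_const.
      generalize (loc_gt' 0 1 ltac:(lra)). apply filter_imp. intros; apply HI; auto. }
    assert (HD2 : Derive (fun t => eval (RI false N) x0 t) 1 = eval (deriv false (RI false N)) x0 1)
      by (apply is_derive_unique, deriv_y; lra).
    rewrite HD2 in HD.
    rewrite RI_d in HD by lra. unfold coef, nb in HD; cbn [negb] in HD.
    assert (HR : eval (RI true (S N)) x0 1 = 0) by (apply (Rmult_eq_reg_l (- INR N)); lra).
    unfold RI in HR, HI. cbn [ERI fst snd eval] in HR.
    rewrite (HI 1 ltac:(lra)) in HR.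
    pose proof (RI_norm N x0 1 ltac:(lra)) as Hn. rewrite (HI 1 ltac:(lra)) in Hn.
    pose proof (Dpos x0 1 ltac:(lra)) as HDp.
    assert (0 < (/ ((x0 + 1) * (x0 + 1) + 1 * 1)) ^ N) by (apply pow_lt; apply Rinv_0_lt_compat; lra).
    assert (Hr : eval (fst (ERI N)) x0 1 <> 0).
    { intros E; rewrite E in Hn. replace (0 ^ 2 + 0 ^ 2) with 0 in Hn by ring. lra. }
    assert (0 < / ((x0 + 1) * (x0 + 1) + 1 * 1)) by (apply Rinv_0_lt_compat; lra).
    apply Hr.
    assert (E2 : (x0 + 1) * eval (fst (ERI N)) x0 1 = 0) by (apply (Rmult_eq_reg_r (/ ((x0 + 1) * (x0 + 1) + 1 * 1))); lra).
    apply (Rmult_eq_reg_l (x0 + 1)); lra.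
  - exists (1/2), (3/2). split; [lra|]. intros x Y [[Hx _] _].
    unfold eu; cbn [eval]. pose proof (R_le1 N x Y Hx) as H. unfold RI.
    apply Rabs_le_between in H. split; nra.
  - intros x Y [[Hx _] HY].
    unfold Rdiv. rewrite Rabs_mult, Rabs_inv, (Rabs_pos_eq Y) by lra.
    apply (Rmult_le_reg_r Y); auto. rewrite Rmult_assoc, Rinv_l, Rmult_1_r by lra.
    eapply Rle_trans. apply v_bound; lra. nra.
  - intros k m Hk Hm.
    exists (dl * INR (N + m) ^ m). intros ds x Y Hl [[Hx _] HY].
    destruct (lin_partial ds 0 dl false N) as [c [b' [Hc Hp]]].
    rewrite Hl in Hc. change (eval (ev dl N)) with (fun x Y => 0 + dl * eval (RI false N) x Y).
    rewrite Hp by lra.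
    replace ((match ds with nil => 0 | _ :: _ => 0 end)) with 0 by (destruct ds; auto).
    rewrite (Rabs_pos_eq dl) in Hc by lra. rewrite Rplus_0_l.
    replace (Y ^ k * (c * eval (RI b' (N + length ds)) x Y)) with (c * (Y ^ k * eval (RI b' (N + length ds)) x Y)) by ring.
    rewrite Rabs_mult.
    pose proof (RI_weight b' (N + length ds) k x Y Hx ltac:(unfold N; lia)).
    pose proof (Rabs_pos c). pose proof (Rabs_pos (Y ^ k * eval (RI b' (N + length ds)) x Y)). nra.
  - intros k m Hk Hm.
    exists (dl * INR (N + m) ^ m). intros ds x Y Hl [[Hx _] HY].
    destruct (lin_partial ds 1 (- dl) true N) as [c [b' [Hc Hp]]].
    rewrite Hl in Hc. change (eval (eu dl N)) with (fun x Y => 1 + - dl * eval (RI true N) x Y).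
    rewrite Hp by lra.
    destruct ds as [|d ds]; [simpl in Hl; lia|].
    rewrite Rabs_Ropp, (Rabs_pos_eq dl) in Hc by lra. rewrite Rplus_0_l.
    replace (Y ^ k * (c * eval (RI b' (N + length (d :: ds))) x Y)) with (c * (Y ^ k * eval (RI b' (N + length (d :: ds))) x Y)) by ring.
    rewrite Rabs_mult.
    pose proof (RI_weight b' (N + length (d :: ds)) k x Y Hx ltac:(unfold N; lia)).
    pose proof (Rabs_pos c). pose proof (Rabs_pos (Y ^ k * eval (RI b' (N + length (d :: ds))) x Y)). nra.
Qed.
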